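(* Let $r\ge2$ and let $\mathcal{P}$ be a set of $r$-patterns such that the family of all $\mathcal{P}$-cliques is reconstructible. Then there is a constant $C>0$ such that a.a.s. $z_{\mathcal{P}}(\mathbb{RM}_n^{(r)})\le C n^{1/r}$.
   Context: An ordered $r$-matching of size $k$ is a set of $k$ pairwise disjoint $r$-element subsets (edges) of a linearly ordered vertex set of size $rk$; $\mathbb{RM}^{(r)}_n$ is a uniformly random ordered $r$-matching on $[rn]$. An $r$-pattern is an ordered $r$-matching of size 2 (written as a word over $\{A,B\}$, each letter $r$ times). For a set $\mathcal P$ of $r$-patterns, a $\mathcal P$-clique is an ordered matching all of whose pairs of edges form patterns in $\mathcal P$ (i.e., induce matchings order-isomorphic to members of $\mathcal P$), and $z_{\mathcal P}(M)$ is the largest size of a $\mathcal P$-clique contained in $M$. The trace $\mathrm{tr}(M)$ of an ordered $r$-matching $M$ is the word over $[r]$ obtained by writing, at each vertex (in the vertex order), the number $i$ if that vertex is the $i$-th vertex (from the left) of its edge. A family $\mathcal F$ of ordered matchings is reconstructible if no two distinct members of $\mathcal F$ on the same ordered vertex set have the same trace. ''A.a.s.'' means with probability tending to 1 as $n\to\infty$. *)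

(* Defs.v *)
From HB Require Import structures.
From mathcomp Require Import all_boot all_order all_algebra.
From mathcomp Require Import all_classical all_reals all_analysis.
Set Implicit Arguments. Unset Strict Implicit. Unset Printing Implicit Defensive.
Import Order.TTheory GRing.Theory Num.Theory.

Definition is_rmatching (r N : nat) (M : {set {set 'I_N}}) : bool :=
  [&& [forall e in M, #|e| == r], finset.trivIset M & finset.cover M == [set: 'I_N]].

(* An r-pattern, written as a word over {A,B} (true = A, false = B),
   with A the edge containing the leftmost vertex: a word of length 2r
   with r letters A, starting with A. *)
Definition is_rpattern (r : nat) (w : seq bool) : bool :=
  [&& size w == (2 * r)%N, count id w == r & head false w].

(* The pattern (word) formed by two disjoint edges e and f: list the
   vertices of e :|: f in increasing order, writing A for the vertices of
   the edge containing the leftmost of them and B for the others. *)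
Definition pattern_of (N : nat) (e f : {set 'I_N}) : seq bool :=
  let s := [seq v <- enum 'I_N | (v \in e) || (v \in f)] in
  match s with
  | [::] => [::]
  | h :: _ => [seq ((v \in e) == (h \in e)) | v <- s]
  end.

Definition is_clique (N : nat) (P : seq bool -> bool) (S : {set {set 'I_N}}) : bool :=
  [forall e in S, forall f in S, (e != f) ==> P (pattern_of e f)].

Definition zP (N : nat) (P : seq bool -> bool) (M : {set {set 'I_N}}) : nat :=
  \max_(S : {set {set 'I_N}} | (S \subset M) && is_clique P S) #|S|.

(* Position (1-based, from the left) of vertex v inside its edge. *)
Definition pos_in_edge (N : nat) (M : {set {set 'I_N}}) (v : 'I_N) : nat :=
  #|[set u : 'I_N | (u <= v)%N && [exists e in M, (u \in e) && (v \in e)]]|.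

Definition trace (N : nat) (M : {set {set 'I_N}}) : seq nat :=
  [seq pos_in_edge M v | v <- enum 'I_N].

Definition cliques_reconstructible (r : nat) (P : seq bool -> bool) : Prop :=
  forall (N : nat) (M1 M2 : {set {set 'I_N}}),
    is_rmatching r M1 -> is_rmatching r M2 ->
    is_clique P M1 -> is_clique P M2 ->
    trace M1 = trace M2 -> M1 = M2.

Definition prob_RM (R : realType) (r n : nat) (Q : {set {set 'I_(r * n)}} -> bool) : R :=
  (#|[set M : {set {set 'I_(r * n)}} | is_rmatching r M && Q M]|%:R / #|[set M : {set {set 'I_(r * n)}} | is_rmatching r M]|%:R)%R.

(* Main.v *)
Require Import Defs.
From HB Require Import structures.
From mathcomp Require Import all_boot all_order all_algebra.
Set Implicit Arguments. Unset Strict Implicit. Unset Printing Implicit Defensive.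
Fixpoint G0 (r m : nat) : nat :=
  if m is m'.+1 then 'C((r * m'.+1).-1, r.-1) * G0 r m' else 1.

Section Count.
Variables (r N : nat).
Hypothesis r_gt0 : 0 < r.
Local Notation T := 'I_N.

Definition match_on (W : {set T}) : {set {set {set T}}} :=
  [set M : {set {set T}} | [&& [forall e in M, #|e| == r], finset.trivIset M & finset.cover M == W]].

Lemma setUDK' (A B : {set {set T}}) : A \subset B -> A :|: (B :\: A) = B.
Proof.
move=> /subsetP sAB; apply/setP => x; rewrite !inE.
by case: (boolP (x \in A)) => //= /sAB ->.
Qed.

Lemma disjP (A B : {set T}) : (forall x, x \in A -> x \in B -> False) -> [disjoint A & B].
Proof. by move=> h; rewrite disjoints_subset; apply/subsetP => x xA; rewrite inE; apply/negP => /(h x xA). Qed.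

Lemma cover_setU (A B : {set {set T}}) : finset.cover (A :|: B) = finset.cover A :|: finset.cover B.
Proof. by rewrite /finset.cover bigcup_setU. Qed.

Lemma cover_setD (M S : {set {set T}}) : finset.trivIset M -> S \subset M ->
  finset.cover (M :\: S) = finset.cover M :\: finset.cover S.
Proof.
move=> /trivIsetP tM sSM; apply/setP => x; rewrite !inE.
apply/bigcupP/andP => [[e /setDP[eM eS] xe]|[xS /bigcupP[e eM xe]]].
  split; last by apply/bigcupP; exists e.
  apply/bigcupP => -[f fS xf].
  have fM : f \in M by apply: (subsetP sSM).
  have ef : e != f by apply: contraNneq eS => ->.
  have := tM _ _ eM fM ef; rewrite disjoint_sym => /disjointFr/(_ xf).
  by rewrite xe.
exists e => //; rewrite inE eM andbT; apply: contra xS => eS.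
by apply/bigcupP; exists e.
Qed.

Lemma match_split (W : {set T}) (S : {set {set T}}) : [forall e in S, #|e| == r] -> finset.trivIset S ->
  finset.cover S \subset W ->
  #|[set M in match_on W | S \subset M]| = #|match_on (W :\: finset.cover S)|.
Proof.
move=> /forall_inP Sr tS sSW.
have ->: [set M in match_on W | S \subset M] =
         (fun T' => S :|: T') @: match_on (W :\: finset.cover S).
  apply/setP => M; rewrite inE; apply/andP/imsetP.
  - case; rewrite inE => /and3P[/forall_inP Mr tM /eqP cM] sSM.
    exists (M :\: S); last by rewrite setUDK'.
    rewrite inE; apply/and3P; split.
    + by apply/forall_inP => e /setDP[eM _]; apply: Mr.
    + exact: trivIsetD.
    + by rewrite cover_setD // cM.
  - case=> T' ; rewrite inE => /and3P[/forall_inP Tr tT /eqP cT] ->.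
    split; last exact: subsetUl.
    rewrite inE; apply/and3P; split.
    + by apply/forall_inP => e /setUP[]; [apply: Sr | apply: Tr].
    + apply: trivIsetU => //; apply/disjP => x xS; rewrite cT inE xS //.
    + rewrite cover_setU cT; apply/eqP/setP => x; rewrite !inE.
      by case: (boolP (x \in finset.cover S)) => //= /(subsetP sSW) ->.
apply: card_in_imset => T1 T2.
have key : forall T', T' \in match_on (W :\: finset.cover S) -> (S :|: T') :\: S = T'.
  move=> T'; rewrite inE => /and3P[/forall_inP Tr _ /eqP cT].
  rewrite setDUl setDv set0U; apply/setDidPl; rewrite disjoint_sym.
  apply/pred0P => e /=; apply/andP => -[eS eT].
  have : e \subset finset.cover S by apply: bigcup_sup.
  have : e \subset finset.cover T' by apply: bigcup_sup.
  rewrite cT => /subsetP h1 /subsetP h2.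
  have : 0 < #|e| by rewrite (eqP (Tr _ eT)).
  case/card_gt0P => x xe; have := h1 _ xe; rewrite inE (h2 _ xe) //.
by move=> h1 h2 e; rewrite -(key _ h1) e key.
Qed.

Lemma match_on0 : match_on set0 = [set set0].
Proof.
apply/setP => M; rewrite !inE; apply/idP/eqP => [/and3P[/forall_inP Mr _ /eqP cM]|->].
  apply/setP => e; rewrite inE; apply/negP => eM.
  have : 0 < #|e| by rewrite (eqP (Mr _ eM)).
  case/card_gt0P => x xe.
  have : x \in finset.cover M by apply/bigcupP; exists e.
  by rewrite cM inE.
apply/and3P; split.
- by apply/forall_inP => e; rewrite inE.
- by rewrite /trivIset /finset.cover !big_set0 cards0.
- by rewrite /finset.cover big_set0.
Qed.

Lemma count_match m (W : {set T}) : #|W| = r * m -> #|match_on W| = G0 r m.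
Proof.
elim: m W => [|m IH] W cW.
  by rewrite muln0 in cW; rewrite (cards0_eq cW) match_on0 cards1.
have : 0 < #|W| by rewrite cW muln_gt0 r_gt0.
case/card_gt0P => v vW.
pose D := [set A : {set T} | A \subset W :\ v & #|A| == r.-1].
rewrite -sum1_card (partition_big (fun M => pblock M v :\ v) (mem D)) /=; last first.
  move=> M; rewrite inE => /and3P[/forall_inP Mr tM /eqP cM].
  have vc : v \in finset.cover M by rewrite cM.
  have pM := pblock_mem vc.
  rewrite inE; apply/andP; split.
    apply/subsetP => x; rewrite !inE => /andP[-> xp]; rewrite -cM.
    by apply/bigcupP; exists (pblock M v).
  have := cardsD1 v (pblock M v); rewrite mem_pblock vc (eqP (Mr _ pM)).
  by case: (r) r_gt0 => // r' _ [] ->.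
have inner : forall A, A \in D ->
    \sum_(M in match_on W | pblock M v :\ v == A) 1 = G0 r m.
  move=> A; rewrite inE => /andP[sA /eqP cA].
  have vA : v \notin A by apply/negP => /(subsetP sA); rewrite !inE eqxx.
  have sW : v |: A \subset W.
    apply/subsetP => x; rewrite !inE => /orP[/eqP->//|/(subsetP sA)].
    by rewrite !inE => /andP[].
  rewrite sum1dep_card.
  have -> : [set M | (M \in match_on W) && (pblock M v :\ v == A)] =
            [set M in match_on W | [set v |: A] \subset M].
    apply/setP => M; rewrite !inE sub1set.
    apply/andP/andP => -[hM h]; split => //.
      move: hM => /and3P[_ tM /eqP cM].
      have vc : v \in finset.cover M by rewrite cM.
      by rewrite -(eqP h) setD1K ?mem_pblock // pblock_mem.
    move: hM => /and3P[_ tM _].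
    by rewrite (def_pblock tM h (setU11 _ _)) setU1K.
  rewrite match_split.
  - apply: IH; rewrite cover1 cardsD (setIidPr sW) cardsU1 vA cA cW.
    by case: (r) r_gt0 => // r' _; rewrite mulnS add1n addKn.
  - by apply/forall_inP => e; rewrite inE => /eqP ->; rewrite cardsU1 vA cA; case: (r) r_gt0.
  - exact: trivIset1.
  - by rewrite cover1.
rewrite (eq_bigr (fun _ => G0 r m)); last by move=> A; apply: inner.
rewrite sum_nat_const /D cards_draws /=.
have -> : #|W :\ v| = (r * m.+1).-1 by rewrite (cardsD1 v W) vW /= add1n in cW; by rewrite -cW.
reflexivity.
Qed.
End Count.
Definition ltO {n} (x y : 'I_n) := (x < y)%N.
Lemma ltO_trans n : transitive (@ltO n). Proof. move=> y x z; exact: ltn_trans. Qed.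
Lemma ltO_irr n : irreflexive (@ltO n). Proof. move=> x; exact: ltnn. Qed.
Lemma sorted_enumT n : sorted (@ltO n) (enum 'I_n).
Proof. by have := iota_ltn_sorted 0 n; rewrite -val_enum_ord sorted_map. Qed.
Lemma sorted_enum n (A : {pred 'I_n}) : sorted (@ltO n) (enum A).
Proof. by have := sorted_filter (@ltO_trans n) (mem A) (sorted_enumT n); rewrite enumT. Qed.

Lemma disjP' (T : finType) (A B : {set T}) : (forall x, x \in A -> x \in B -> False) -> [disjoint A & B].
Proof. by move=> h; rewrite disjoints_subset; apply/subsetP => x xA; rewrite inE; apply/negP => /(h x xA). Qed.

Section Relabel.
Variables (N : nat) (U : {set 'I_N}).
Local Notation T := 'I_N.
Definition ev (i : 'I_#|U|) : T := enum_val i.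

Lemma ev_mono (i j : 'I_#|U|) : (i < j)%N -> ltO (ev i) (ev j).
Proof.
move=> ij; rewrite /ev (enum_val_nth (enum_val i) i) (enum_val_nth (enum_val i) j).
apply: (sorted_ltn_nth (@ltO_trans N)) => //; first exact: sorted_enum.
  by rewrite inE -cardE ltn_ord.
by rewrite inE -cardE ltn_ord.
Qed.

Lemma evP i : ev i \in U. Proof. exact: enum_valP. Qed.

Lemma evK x : x \in U -> exists i, ev i = x.
Proof. by move=> xU; exists (enum_rank_in xU x); rewrite /ev enum_rankK_in. Qed.

Definition pre (e : {set T}) : {set 'I_#|U|} := [set i | ev i \in e].

Lemma filter_ev (e f : {set T}) : e \subset U -> f \subset U ->
  [seq v <- enum T | (v \in e) || (v \in f)] =
  map ev [seq i <- enum 'I_#|U| | (i \in pre e) || (i \in pre f)].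
Proof.
move=> /subsetP eU /subsetP fU; apply: (irr_sorted_eq (@ltO_trans N) (@ltO_irr N)).
- exact: (sorted_filter (@ltO_trans N) _ (sorted_enumT N)).
- rewrite sorted_map; apply: sorted_filter; first by move=> ???; apply: ltO_trans.
  apply: sub_sorted (sorted_enumT _) => i j; exact: ev_mono.
- move=> v; rewrite mem_filter mem_enum andbT; apply/idP/mapP.
    move=> hv; have vU : v \in U by case/orP: hv => [/eU|/fU].
    case: (evK vU) => i ei; exists i => //.
    by rewrite mem_filter mem_enum andbT !inE ei.
  by case=> i; rewrite mem_filter mem_enum andbT !inE => h ->.
Qed.

Lemma pattern_ev (e f : {set T}) : e \subset U -> f \subset U ->
  pattern_of e f = pattern_of (pre e) (pre f).
Proof.
move=> eU fU; rewrite /pattern_of /= filter_ev //.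
case: [seq _ <- _ | _] => [|h s] //=.
congr (_ :: _); first by rewrite !inE.
rewrite -map_comp; apply: eq_map => i /=; rewrite !inE.
done.
Qed.

Lemma imset_pre (e : {set T}) : e \subset U -> ev @: pre e = e.
Proof.
move=> /subsetP eU; apply/setP => x; apply/imsetP/idP => [[i]|xe].
  by rewrite inE => h ->.
by case: (evK (eU _ xe)) => i ei; exists i; rewrite // inE ei.
Qed.

Lemma card_pre (e : {set T}) : e \subset U -> #|pre e| = #|e|.
Proof. by move=> eU; rewrite -{2}(imset_pre eU) card_imset //; exact: enum_val_inj. Qed.

Lemma pre_inj (e f : {set T}) : e \subset U -> f \subset U -> pre e = pre f -> e = f.
Proof. by move=> eU fU h; rewrite -(imset_pre eU) -(imset_pre fU) h. Qed.

Definition relabel (S : {set {set T}}) : {set {set 'I_#|U|}} := pre @: S.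

Lemma sub_cover (S : {set {set T}}) (e : {set T}) : e \in S -> e \subset finset.cover S.
Proof. by move=> eS; apply/subsetP => x xe; apply/bigcupP; exists e. Qed.

Lemma relabelK (S : {set {set T}}) : finset.cover S = U -> (fun e' : {set 'I_#|U|} => ev @: e') @: relabel S = S.
Proof.
move=> cS; rewrite -imset_comp -[RHS]imset_id; apply: eq_in_imset => e eS /=.
by apply: imset_pre; rewrite -cS sub_cover.
Qed.

Lemma relabel_inj (S1 S2 : {set {set T}}) : finset.cover S1 = U -> finset.cover S2 = U ->
  relabel S1 = relabel S2 -> S1 = S2.
Proof. by move=> c1 c2 h; rewrite -(relabelK c1) -(relabelK c2) h. Qed.

Lemma relabel_match (r : nat) (S : {set {set T}}) : [forall e in S, #|e| == r] -> finset.trivIset S ->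
  finset.cover S = U -> is_rmatching r (relabel S).
Proof.
move=> /forall_inP Sr tS cS; have sU e : e \in S -> e \subset U by rewrite -cS; apply: sub_cover.
apply/and3P; split.
- apply/forall_inP => _ /imsetP[e eS ->]; rewrite card_pre ?sU //; exact: Sr.
- apply/trivIsetP => _ _ /imsetP[e eS ->] /imsetP[f fS ->] ne.
  have ef : e != f by apply: contraNneq ne => ->.
  have dj := (trivIsetP tS) _ _ eS fS ef.
  apply: disjP' => i; rewrite !inE => h1 h2.
  by have := disjointFr dj h1; rewrite h2.
- apply/eqP/setP => i; rewrite inE.
  have : ev i \in finset.cover S by rewrite cS; exact: evP.
  case/bigcupP => e eS ie.
  by apply/bigcupP; exists (pre e); [apply: imset_f | rewrite inE].
Qed.

Lemma relabel_clique (P : seq bool -> bool) (S : {set {set T}}) : finset.cover S = U -> is_clique P S ->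
  is_clique P (relabel S).
Proof.
move=> cS /forall_inP cl; have sU e : e \in S -> e \subset U by rewrite -cS; apply: sub_cover.
apply/forall_inP => _ /imsetP[e eS ->]; apply/forall_inP => _ /imsetP[f fS ->].
apply/implyP => ne; rewrite -pattern_ev ?sU //.
have ef : e != f by apply: contraNneq ne => ->.
by have := cl _ eS => /forall_inP/(_ _ fS)/implyP; apply.
Qed.
End Relabel.
Lemma card_bigcup_le (I J : finType) (B : {set I}) (F : I -> {set J}) :
  #|\bigcup_(i in B) F i| <= \sum_(i in B) #|F i|.
Proof.
apply: (big_ind2 (fun (A : {set J}) (n : nat) => #|A| <= n)) => //.
  by rewrite cards0.
move=> a1 a2 b1 b2 h1 h2; rewrite cardsU; apply: leq_trans (leq_subr _ _) _.
exact: leq_add.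
Qed.

Lemma trace_le (r n : nat) (M : {set {set 'I_n}}) i : is_rmatching r M ->
  nth 0 (trace M) i <= r.
Proof.
case/and3P => /forall_inP Mr tM /eqP cM.
have [ilt|ige] := ltnP i (size (trace M)); last by rewrite nth_default.
have /mapP[v _ ->] := mem_nth 0 ilt.
have vc : v \in finset.cover M by rewrite cM inE.
rewrite /pos_in_edge -(eqP (Mr _ (pblock_mem vc))).
apply: subset_leq_card; apply/subsetP => u; rewrite inE => /andP[_ /exists_inP[e eM /andP[ue ve]]].
by rewrite (def_pblock tM eM ve).
Qed.

Section Cliques.
Variables (r N : nat) (P : seq bool -> bool).
Hypothesis r_gt0 : 0 < r.
Hypothesis recon : cliques_reconstructible r P.
Local Notation T := 'I_N.

Definition cliques k := [set S : {set {set T}} |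
  [&& [forall e in S, #|e| == r], finset.trivIset S, is_clique P S & #|S| == k]].

Lemma cover_card (S : {set {set T}}) : [forall e in S, #|e| == r] ->
  finset.trivIset S -> #|finset.cover S| = r * #|S|.
Proof.
move=> /forall_inP Sr /eqP <-; rewrite (eq_bigr (fun _ => r)).
  by rewrite sum_nat_const mulnC.
by move=> e /Sr/eqP.
Qed.

Definition code k (U : {set T}) (S : {set {set T}}) : {ffun 'I_(r * k) -> 'I_r.+1} :=
  [ffun i : 'I_(r * k) => inord (nth 0 (trace (relabel U S)) (nat_of_ord i))].

Lemma card_cliques k : #|cliques k| <= 'C(N, r * k) * r.+1 ^ (r * k).
Proof.
pose F (S : {set {set T}}) := (finset.cover S, code k (finset.cover S) S).
rewrite -(@card_in_imset _ _ F); last first.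
  move=> S1 S2; rewrite !inE => /and4P[s1 t1 c1 /eqP k1] /and4P[s2 t2 c2 /eqP k2] [ec ecode].
  rewrite -ec in ecode.
  have m1 := relabel_match s1 t1 (erefl (finset.cover S1)).
  have m2 := relabel_match s2 t2 (esym ec).
  apply: (relabel_inj (U := finset.cover S1)) => //.
  apply: recon => //.
  - exact: relabel_clique.
  - exact: relabel_clique.
  apply: (@eq_from_nth _ 0); first by rewrite !size_map.
  move=> i; rewrite size_map size_enum_ord => ilt0.
  have ilt : i < r * k by rewrite -k1 -(cover_card s1 t1).
  have := congr1 (fun g : {ffun 'I_(r * k) -> 'I_r.+1} => g (Ordinal ilt)) ecode; rewrite !ffunE /= => /(congr1 (@nat_of_ord _)).
  by rewrite !inordK // ltnS trace_le.
apply: (leq_trans (subset_leq_card (B := setX [set U : {set T} | #|U| == r * k]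
                                          [set: {ffun 'I_(r * k) -> 'I_r.+1}]) _)).
  apply/subsetP => _ /imsetP[S hS ->]; rewrite !inE andbT.
  by move: hS; rewrite inE => /and4P[s t _ /eqP ck]; rewrite cover_card // ck.
by rewrite cardsX cardsT card_ffun !card_ord card_draws card_ord.
Qed.

Lemma zP_witness (M : {set {set T}}) k : M \in match_on r [set: T] -> k <= zP P M ->
  exists2 S, S \in cliques k & S \subset M.
Proof.
rewrite inE => /and3P[/forall_inP Mr tM _] hk.
have sub_ok (S : {set {set T}}) : S \subset M -> [forall e in S, #|e| == r] && finset.trivIset S.
  move=> sSM; apply/andP; split; last exact: trivIsetS tM.
  by apply/forall_inP => e /(subsetP sSM) /Mr.
case: (pickP (fun S : {set {set T}} => ((S \subset M) && is_clique P S) && (k <= #|S|))) => [S0 | none].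
  case/andP => /andP[sM cl] kS.
  case/card_geqP: kS => s [us ss subs].
  exists [set x in s]; last first.
    by apply/subsetP => x; rewrite inE => /subs /(subsetP sM).
  have sS0 : [set x in s] \subset S0 by apply/subsetP => x; rewrite inE => /subs.
  rewrite inE; case/andP: (sub_ok _ (subset_trans sS0 sM)) => -> -> /=.
  apply/andP; split.
    apply/forall_inP => e /(subsetP sS0) eS; apply/forall_inP => f /(subsetP sS0) fS.
    by move/forall_inP: cl => /(_ _ eS) /forall_inP /(_ _ fS).
  by rewrite cardsE (card_uniqP us) ss.
move: none; case: k hk => [_ _|k hk none].
  exists set0; last exact: sub0set.
  rewrite inE; case/andP: (sub_ok _ (sub0set M)) => -> -> /=; rewrite cards0 andbT.
  by apply/forall_inP => e; rewrite inE.
suff : zP P M <= k by rewrite leqNgt hk.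
apply/bigmax_leqP => S cS; have := none S; rewrite cS /= => /negbT.
by rewrite -ltnNge ltnS.
Qed.

Lemma bad_bound n k : N = r * n ->
  #|[set M in match_on r [set: T] | k <= zP P M]| <= #|cliques k| * G0 r (n - k).
Proof.
move=> hN.
apply: (leq_trans (subset_leq_card (B := \bigcup_(S in cliques k)
          [set M in match_on r setT | S \subset M]) _)).
  apply/subsetP => M; rewrite inE => /andP[hM hk].
  case: (zP_witness hM hk) => S hS sSM.
  by apply/bigcupP; exists S; rewrite // inE hM.
apply: leq_trans (card_bigcup_le _ _) _.
rewrite -sum_nat_const; apply: leq_sum => S; rewrite inE => /and4P[s t _ /eqP ck].
rewrite match_split // ?subsetT // (count_match r_gt0 (m := n - k)) //.
by rewrite cardsD setTI cardsT card_ord cover_card // ck hN mulnBr.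
Qed.
End Cliques.
From mathcomp Require Import ring.
Lemma ffact_add n a j : n ^_ (a + j) = n ^_ a * (n - a) ^_ j.
Proof.
elim: j => [|j IH]; first by rewrite addn0 ffactn0 muln1.
by rewrite addnS !ffactnSr IH subnDA mulnA.
Qed.

Lemma ffact_r r m : 0 < r -> (r * m) ^_ r = m * r`! * 'C((r * m).-1, r.-1).
Proof.
case: r => // r' _ /=.
rewrite ffactnS -bin_ffact factS.
ring.
Qed.

Lemma ffact_bound r n k : 0 < r -> k <= n ->
  (r * n) ^_ (r * k) * G0 r (n - k) <= r`! ^ k * n ^ k * G0 r n.
Proof.
move=> r0; elim: k => [|k IH] hk.
  by rewrite muln0 ffactn0 subn0 !expn0 !mul1n.
have hk' : k <= n by apply: ltnW.
have := IH hk'.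
have [m' hm] : exists m', n - k = m'.+1 by exists (n - k).-1; rewrite prednK // subn_gt0.
have hm2 : n - k.+1 = m' by rewrite subnS hm.
rewrite hm hm2 mulnS addnC ffact_add -mulnBr hm ffact_r //= => h.
have le : m'.+1 <= n by rewrite -hm leq_subr.
apply: (leq_trans (n := (r * n) ^_ (r * k) * ('C((r * m'.+1).-1, r.-1) * G0 r m') * (m'.+1 * r`!))).
  by rewrite !mulnA leq_eqVlt; apply/orP; left; apply/eqP; ring.
apply: (leq_trans (leq_mul h (leqnn _))).
rewrite !expnS.
apply: (@leq_trans (r`! ^ k * n ^ k * G0 r n * (n * r`!))).
  by apply: leq_mul => //; apply: leq_mul.
by rewrite leq_eqVlt; apply/orP; left; apply/eqP; ring.
Qed.
Lemma nat_final r n k (P : seq bool -> bool) : 0 < r -> cliques_reconstructible r P ->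
  #|[set M in match_on r [set: 'I_(r * n)] | k <= zP P M]| * (r * k)`! <=
  r.+1 ^ (r * k) * (r`! ^ k * n ^ k) * G0 r n.
Proof.
move=> r0 recon.
have h1 := @bad_bound r (r * n) P r0 n k erefl.
have h2 := @card_cliques r (r * n) P recon k.
apply: (leq_trans (leq_mul h1 (leqnn _))).
apply: (leq_trans (leq_mul (leq_mul h2 (leqnn (G0 r (n - k)))) (leqnn _))).
have -> : 'C(r * n, r * k) * r.+1 ^ (r * k) * G0 r (n - k) * (r * k)`! =
          r.+1 ^ (r * k) * ((r * n) ^_ (r * k) * G0 r (n - k)).
  by rewrite -bin_ffact; ring.
rewrite -mulnA leq_mul2l; apply/orP; right.
have [kn|nk] := leqP k n; first exact: ffact_bound.
by rewrite -bin_ffact bin_small ?mul0n // ltn_pmul2l.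
Qed.
Lemma G0_gt0 r m : 0 < r -> 0 < G0 r m.
Proof.
move=> r0; elim: m => // m IH /=; rewrite muln_gt0 IH andbT bin_gt0.
case: r r0 {IH} => // r' _; rewrite mulnS addSn; exact: leq_addr.
Qed.

Lemma card_split (X : finType) (p q : pred X) :
  #|[set x | p x && q x]| + #|[set x | p x && ~~ q x]| = #|[set x | p x]|.
Proof.
rewrite -(cardsID [set x | q x] [set x | p x]); have e1 : [set x | p x & q x] = [set x | p x] :&: [set x | q x] by apply/setP => x; rewrite !inE.
have e2 : [set x | p x & ~~ q x] = [set x | p x] :\: [set x | q x] by apply/setP => x; rewrite !inE andbC.
by rewrite e1 e2.
Qed.

Lemma final_count r n k (P : seq bool -> bool) (Q : pred {set {set 'I_(r * n)}}) :
  0 < r -> cliques_reconstructible r P ->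
  (forall M : {set {set 'I_(r * n)}}, is_rmatching r M -> ~~ Q M -> k <= zP P M) ->
  #|[set M : {set {set 'I_(r * n)}} | is_rmatching r M && ~~ Q M]| * (r * k)`! <=
  r.+1 ^ (r * k) * (r`! ^ k * n ^ k) * #|[set M : {set {set 'I_(r * n)}} | is_rmatching r M]|.
Proof.
move=> r0 recon hQ.
have -> : #|[set M : {set {set 'I_(r * n)}} | is_rmatching r M]| = G0 r n.
  rewrite -(count_match r0 (W := [set: 'I_(r * n)])); last by rewrite cardsT card_ord.
  by apply: eq_card => M; rewrite !inE.
apply: leq_trans (nat_final n k r0 recon).
rewrite leq_mul2r; apply/orP; right; apply: subset_leq_card.
apply/subsetP => M; rewrite !inE => /andP[hM hq].
by rewrite hQ // andbT; exact: hM.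
Qed.
Lemma card_all r n : 0 < r ->
  #|[set M : {set {set 'I_(r * n)}} | is_rmatching r M]| = G0 r n.
Proof.
move=> r0; rewrite -(count_match r0 (W := [set: 'I_(r * n)])); last by rewrite cardsT card_ord.
by apply: eq_card => M; rewrite !inE.
Qed.

From mathcomp Require Import all_classical all_reals all_analysis.
Import Order.TTheory GRing.Theory Num.Theory.
Import numFieldNormedType.Exports.

Section Real.
Local Open Scope ring_scope.
Variable R : realType.

Lemma e_ge1 : (1 : R) <= expR 1.
Proof. by apply: le_trans (expR_ge1Dx 1); rewrite lerDl. Qed.

Lemma aux_pow (j : nat) : (j.+1%:R : R) ^+ j <= expR 1 * (j%:R) ^+ j.
Proof.
case: j => [|j]; first by rewrite !expr0 mulr1 e_ge1.
set x : R := j.+1%:R.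
have x0 : 0 < x by rewrite ltr0n.
have h1 : (j.+2%:R : R) <= x * expR x^-1.
  have -> : (j.+2%:R : R) = x * (1 + x^-1) by rewrite mulrDr mulr1 mulfV ?gt_eqF // /x natr1.
  by apply: ler_wpM2l; [exact: ltW | exact: expR_ge1Dx].
have ha : (j.+2%:R : R) \in Num.nneg by rewrite nnegrE ler0n.
have hb : x * expR x^-1 \in Num.nneg by rewrite nnegrE mulr_ge0 // ?ltW // expR_gt0.
apply: le_trans (lerXn2r j.+1 ha hb h1) _.
rewrite exprMn -expRM_natl -/x mulfV ?gt_eqF // mulrC.
done.
Qed.

Lemma fact_lb (j : nat) : (j%:R : R) ^+ j <= expR 1 ^+ j * (j`!)%:R.
Proof.
elim: j => [|j IH]; first by rewrite !expr0 mul1r fact0.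
rewrite exprS factS natrM exprS.
apply: le_trans (ler_wpM2l (ler0n _ _) (aux_pow j)) _.
apply: le_trans (ler_wpM2l (ler0n _ _) (ler_wpM2l (ltW (expR_gt0 1)) IH)) _.
rewrite le_eqVlt; apply/orP; left; apply/eqP; ring.
Qed.

Definition cst (r : nat) : R := (r.+1%:R) ^+ r * (r`!)%:R * expR 1 ^+ r.

Lemma cst_ge1 r : 1 <= cst r.
Proof.
rewrite /cst; apply: mulr_ege1; last exact: exprn_ege1 e_ge1.
apply: mulr_ege1; first by apply: exprn_ege1; rewrite ler1n.
by rewrite ler1n fact_gt0.
Qed.

Lemma ratio r n k : (0 < r)%N -> (0 < n)%N -> (0 < k)%N ->
  2 ^+ r * cst r * n%:R <= (k%:R : R) ^+ r ->
  ((r.+1 ^ (r * k) * (r`! ^ k * n ^ k))%:R : R) <= n%:R^-1 * ((r * k)`!)%:R.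
Proof.
move=> r0 n0 k0 H.
set e := expR (1 : R).
have e0 : 0 < e by apply: expR_gt0.
have n0' : (0 : R) < n%:R by rewrite ltr0n.
set L := ((r.+1 ^ (r * k) * (r`! ^ k * n ^ k))%:R : R).
have step1 : L * n%:R * e ^+ (r * k) = (cst r * n%:R) ^+ k * n%:R.
  rewrite /L /cst !natrM !natrX !exprMn -!exprM.
  ring.
have nle : (n%:R : R) <= (2 ^+ r) ^+ k.
  have h1 : (n%:R : R) <= (k%:R) ^+ r.
    apply: le_trans H; rewrite -[X in X <= _]mul1r ler_wpM2r //.
    by apply: mulr_ege1; [apply: exprn_ege1; rewrite ler1n | exact: cst_ge1].
  apply: le_trans h1 _; rewrite -exprM mulnC exprM.
  apply: lerXn2r; rewrite ?nnegrE ?ler0n ?exprn_ge0 //.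
  have : (k <= 2 ^ k)%N by apply/ltnW/ltn_expl.
  by rewrite -(ler_nat R) natrX.
have step2 : (cst r * n%:R) ^+ k * n%:R <= (k%:R : R) ^+ (r * k).
  rewrite exprM.
  have hge : 0 <= cst r * n%:R by rewrite mulr_ge0 // ?ler0n // (le_trans ler01 (cst_ge1 r)).
  apply: le_trans (_ : (2 ^+ r * cst r * n%:R) ^+ k <= _).
    rewrite -mulrA [X in _ <= X]exprMn mulrC; apply: ler_wpM2r; last exact: nle.
    exact: exprn_ge0.
  have c0 : 0 <= cst r by apply: le_trans ler01 (cst_ge1 r).
  apply: lerXn2r => //; rewrite nnegrE.
    by rewrite !mulr_ge0 ?exprn_ge0 ?ler0n.
  by rewrite exprn_ge0 ?ler0n.
have step3 : (k%:R : R) ^+ (r * k) <= e ^+ (r * k) * ((r * k)`!)%:R.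
  apply: le_trans (fact_lb (r * k)).
  apply: lerXn2r; rewrite ?nnegrE ?ler0n // ler_nat.
  by rewrite leq_pmull.
have : L * n%:R * e ^+ (r * k) <= ((r * k)`!)%:R * e ^+ (r * k).
  by rewrite step1 [X in _ <= X]mulrC; exact: le_trans step2 step3.
rewrite ler_pM2r ?exprn_gt0 // => h.
by rewrite -ler_pdivlMr // in h; rewrite mulrC.
Qed.

Lemma powR_invr (a : R) (r : nat) : 0 <= a -> (0 < r)%N -> (a `^ (r%:R^-1)) ^+ r = a.
Proof.
move=> a0 r0; rewrite -powR_mulrn ?powR_ge0 // -powRrM mulVf ?powRr1 //.
by rewrite pnatr_eq0 -lt0n.
Qed.
End Real.
Local Open Scope ring_scope.

Lemma main_bound (R : realType) (r : nat) (P : seq bool -> bool) (C : R) (n : nat) :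
  (0 < r)%N -> cliques_reconstructible r P -> 0 < C ->
  C ^+ r = 2 ^+ r * cst R r -> (0 < n)%N ->
  1 - n%:R^-1 <= @prob_RM R r n (fun M => ((zP P M)%:R <= C * powR (n%:R) (r%:R^-1))%R) <= 1.
Proof.
move=> r0 recon C0 hC n0.
set Q := (fun M : {set {set 'I_(r * n)}} => ((zP P M)%:R <= C * powR (n%:R) (r%:R^-1))%R).
rewrite /prob_RM.
have hsplit := card_split (fun M : {set {set 'I_(r * n)}} => is_rmatching r M) Q.
set a := #|[set M : {set {set 'I_(r * n)}} | is_rmatching r M]%SET| in hsplit *.
set g := #|[set M : {set {set 'I_(r * n)}} | is_rmatching r M && Q M]%SET| in hsplit *.
set b := #|[set M : {set {set 'I_(r * n)}} | is_rmatching r M && ~~ Q M]%SET| in hsplit.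
have a0 : (0 < a)%N by rewrite /a card_all // G0_gt0.
have a0' : (0 : R) < a%:R by rewrite ltr0n.
set x := C * powR (n%:R : R) (r%:R^-1).
have x0 : 0 <= x by apply: mulr_ge0; [exact: ltW | exact: powR_ge0].
pose k0 := (Num.Def.truncn x).+1.
have hQ : forall M, is_rmatching r M -> ~~ Q M -> (k0 <= zP P M)%N.
  move=> M _ hq; rewrite /Q -/x -ltNge in hq.
  by rewrite /k0 truncn_lt_nat.
have hfc := @final_count r n k0 P Q r0 recon hQ.
have hk : 2 ^+ r * cst R r * n%:R <= (k0%:R : R) ^+ r.
  have <- : x ^+ r = 2 ^+ r * cst R r * n%:R by rewrite /x exprMn hC powR_invr ?ler0n.
  apply: lerXn2r; rewrite ?nnegrE ?ler0n //.
  exact: ltW (truncnS_gt x).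
have hr := ratio r0 n0 (ltn0Sn _) hk.
have hb : (b%:R : R) <= n%:R^-1 * a%:R.
  set F := ((r * k0)`!)%:R : R.
  have F0 : 0 < F by rewrite ltr0n fact_gt0.
  have h1 : (b%:R : R) * F <= n%:R^-1 * F * a%:R.
    apply: le_trans (_ : ((r.+1 ^ (r * k0) * (r`! ^ k0 * n ^ k0))%:R : R) * a%:R <= _).
      by rewrite -natrM -natrM ler_nat.
    by apply: ler_wpM2r; rewrite ?ler0n.
  by rewrite mulrAC ler_pM2r // in h1.
have ga : g = (a - b)%N by rewrite -hsplit addnK.
apply/andP; split.
  rewrite ga natrB; last by rewrite -hsplit leq_addl.
  rewrite mulrBl divff ?gt_eqF // lerD2l lerN2.
  by rewrite ler_pdivrMr.
by rewrite ler_pdivrMr // mul1r ler_nat -hsplit leq_addr.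
Qed.

Local Open Scope classical_set_scope.
Unset Implicit Arguments.
Theorem mainTheorem7 (R : realType) (r : nat) (P : seq bool -> bool) :
  (2 <= r)%N ->
  (forall w, P w -> is_rpattern r w) ->
  cliques_reconstructible r P ->
  exists C : R, 0 < C /\
    (((fun n : nat =>
       @prob_RM R r n (fun M => ((zP P M)%:R <= C * powR (n%:R) (r%:R^-1))%R))
       : R^nat) @ \oo --> (1 : R)).
Proof.
move=> r2 _ recon.
have r0 : (0 < r)%N by apply: leq_trans r2.
have c1 : 1 <= cst R r := cst_ge1 R r.
have c0 : 0 < cst R r by apply: lt_le_trans ltr01 c1.
pose C : R := 2 * cst R r `^ (r%:R^-1).
have C0 : 0 < C by rewrite mulr_gt0 // powR_gt0.
have hC : C ^+ r = 2 ^+ r * cst R r by rewrite /C exprMn powR_invr ?ltW.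
exists C; split => //.
apply: (@squeeze_cvgr _ _ _ _ (fun n => 1 - 2 * harmonic n) (fun _ => 1)).
- near=> n.
  have n1 : (0 < n)%N by near: n; exact: nbhs_infty_gt.
  have /andP[h1 h2] := main_bound r0 recon C0 hC n1.
  apply/andP; split => //.
  apply: le_trans h1; rewrite lerD2l lerN2.
  rewrite /harmonic /=.
  have -> : (n%:R : R)^-1 = 2 * (2 * n%:R)^-1.
    by rewrite invfM mulrA mulfV ?mul1r // pnatr_eq0.
  apply: ler_wpM2l => //; rewrite lef_pV2 ?posrE ?mulr_gt0 ?ltr0n //.
  by rewrite -natrM ler_nat mul2n -addnn -addn1 leq_add2l.
- have H : ((fun=> (1:R)) - (fun x : nat => 2 * harmonic x)) x @[x --> \oo] --> (1 - 2 * 0 : R).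
    by apply: cvgB; [exact: cvg_cst | exact: cvgMl_tmp (@cvg_harmonic R)].
  by rewrite mulr0 subr0 in H.
- exact: cvg_cst.
Unshelve. all: by end_near.
Qed.
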